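(* For every positive integer $n$, the order supergraph $\mathcal{S}(A_n)$ of the alternating group $A_n$ is cyclically separable if and only if $n \geq 4$.
   Context: All graphs are simple and undirected. For a finite group $G$, the order supergraph $\mathcal{S}(G)$ is the graph with vertex set $G$ in which two distinct vertices $x,y$ are adjacent if and only if the order of $x$ divides the order of $y$ or the order of $y$ divides the order of $x$. For a graph $\Gamma$, a vertex cutset is a set $S$ of vertices such that $\Gamma - S$ is disconnected; a cyclic vertex cutset is a vertex cutset $S$ such that $\Gamma - S$ has at least two connected components each of which contains a cycle. $\Gamma$ is called cyclically separable if it has a cyclic vertex cutset. *)

(* Defs.v *)
From mathcomp Require Import all_boot all_fingroup all_solvable.
Set Implicit Arguments.
Unset Strict Implicit.
Unset Printing Implicit Defensive.

Section Graphs.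
Variable T : finType.
(* A simple undirected graph with vertex set V : {set T} and adjacency e
   (assumed symmetric; loops are excluded by [rel_in] below). *)
Variables (V : {set T}) (e : rel T).

Definition rel_in (W : {set T}) : rel T :=
  [rel x y | [&& x \in W, y \in W, x != y & e x y]].

Definition component (W : {set T}) (x : T) : {set T} :=
  [set y in W | connect (rel_in W) x y].

Definition is_cycle (W : {set T}) (s : seq T) : bool :=
  [&& 2 < size s, uniq s, all (fun v => v \in W) s & path.cycle (rel_in W) s].

Definition contains_cycle (W C : {set T}) : Prop :=
  exists s : seq T, is_cycle W s /\ {subset s <= C}.

Definition cyclic_vertex_cutset (S : {set T}) : Prop :=
  S \subset V /\
  exists x y : T, [/\ x \in V :\: S, y \in V :\: S,
    ~~ connect (rel_in (V :\: S)) x y,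
    contains_cycle (V :\: S) (component (V :\: S) x) &
    contains_cycle (V :\: S) (component (V :\: S) y)].

Definition cyclically_separable : Prop :=
  exists S : {set T}, cyclic_vertex_cutset S.
End Graphs.

Definition order_super_rel (gT : finGroupType) : rel gT :=
  [rel x y | (x != y) && ((#[x]%g %| #[y]%g) || (#[y]%g %| #[x]%g))].

Definition order_supergraph_cyclically_separable (gT : finGroupType)
  (G : {set gT}) : Prop :=
  cyclically_separable G (@order_super_rel gT).

(* Main.v *)
Require Import Defs.
From mathcomp Require Import all_boot all_fingroup all_solvable.
From mathcomp Require Import zify.
Set Implicit Arguments. Unset Strict Implicit. Unset Printing Implicit Defensive.

Module Perms.
Local Open Scope group_scope.
Section P.
Variables (T : finType) (a b c d : T).
Hypotheses (ab : a != b) (ac : a != c) (ad : a != d) (bc : b != c) (bd : b != d) (cd : c != d).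

Lemma tpE (x y z : T) : tperm x y z = if z == x then y else if z == y then x else z.
Proof. by case: tpermP => [->|->|/eqP/negbTE-> /eqP/negbTE->]; rewrite ?eqxx //; case: eqP. Qed.

Lemma ba : b != a. Proof. by rewrite eq_sym. Qed.
Lemma ca : c != a. Proof. by rewrite eq_sym. Qed.
Lemma da : d != a. Proof. by rewrite eq_sym. Qed.
Lemma cb : c != b. Proof. by rewrite eq_sym. Qed.
Lemma db : d != b. Proof. by rewrite eq_sym. Qed.
Lemma dc : d != c. Proof. by rewrite eq_sym. Qed.

Ltac simp := rewrite ?permM ?tpE ?eqxx /=;
  rewrite ?(negbTE ab) ?(negbTE ac) ?(negbTE ad) ?(negbTE bc) ?(negbTE bd) ?(negbTE cd)
   ?(negbTE ba) ?(negbTE ca) ?(negbTE da) ?(negbTE cb) ?(negbTE db) ?(negbTE dc) /= ?eqxx //.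

Ltac zcase z :=
  destruct (eqVneq z a) as [->|za]; [by do 6 simp|];
  destruct (eqVneq z b) as [->|zb]; [by do 6 simp|];
  destruct (eqVneq z c) as [->|zc]; [by do 6 simp|];
  destruct (eqVneq z d) as [->|zd]; [by do 6 simp|];
  by do 6 (simp; rewrite ?(negbTE za) ?(negbTE zb) ?(negbTE zc) ?(negbTE zd) /=).

Lemma ordp (x : {perm T}) p : prime p -> x != 1 -> x ^+ p == 1 -> #[x] = p.
Proof.
move=> pp x1 x2; apply/(prime_nt_dvdP pp); first by rewrite order_eq1.
by rewrite order_dvdn.
Qed.

Definition i1 := tperm a b * tperm c d.
Definition i2 := tperm a c * tperm b d.
Definition i3 := tperm a d * tperm b c.
Definition t1 := tperm a b * tperm a c.
Definition t2 := tperm a c * tperm a b.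
Definition t3 := tperm a b * tperm a d.

Ltac neq p := apply/eqP => /(congr1 (fun s : {perm T} => s p)) /eqP;
  rewrite ?perm1 /i1 /i2 /i3 /t1 /t2 /t3; do 4 simp.

Ltac ordt := apply: ordp => //; [neq a|
  apply/eqP; apply/permP; let z := fresh "z" in intro z; rewrite perm1 permX /= /i1 /i2 /i3 /t1 /t2 /t3; zcase z].

Lemma i1o : #[i1] = 2. Proof. ordt. Qed.
Lemma i2o : #[i2] = 2. Proof. ordt. Qed.
Lemma i3o : #[i3] = 2. Proof. ordt. Qed.
Lemma t1o : #[t1] = 3. Proof. ordt. Qed.
Lemma t2o : #[t2] = 3. Proof. ordt. Qed.
Lemma t3o : #[t3] = 3. Proof. ordt. Qed.
Lemma i12 : i1 != i2. Proof. neq a. Qed.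
Lemma i13 : i1 != i3. Proof. neq a. Qed.
Lemma i23 : i2 != i3. Proof. neq a. Qed.
Lemma t12 : t1 != t2. Proof. neq a. Qed.
Lemma t13 : t1 != t3. Proof. neq b. Qed.
Lemma t23 : t2 != t3. Proof. neq a. Qed.
Lemma i1A : i1 \in 'Alt_T. Proof. by rewrite Alt_even !odd_permM !odd_tperm ?ab ?ac ?ad ?bc ?bd ?cd. Qed.
Lemma i2A : i2 \in 'Alt_T. Proof. by rewrite Alt_even !odd_permM !odd_tperm ?ab ?ac ?ad ?bc ?bd ?cd. Qed.
Lemma i3A : i3 \in 'Alt_T. Proof. by rewrite Alt_even !odd_permM !odd_tperm ?ab ?ac ?ad ?bc ?bd ?cd. Qed.
Lemma t1A : t1 \in 'Alt_T. Proof. by rewrite Alt_even !odd_permM !odd_tperm ?ab ?ac ?ad ?bc ?bd ?cd. Qed.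
Lemma t2A : t2 \in 'Alt_T. Proof. by rewrite Alt_even !odd_permM !odd_tperm ?ab ?ac ?ad ?bc ?bd ?cd. Qed.
Lemma t3A : t3 \in 'Alt_T. Proof. by rewrite Alt_even !odd_permM !odd_tperm ?ab ?ac ?ad ?bc ?bd ?cd. Qed.
End P.
End Perms.
Local Close Scope group_scope.

Section G.
Variable gT : finGroupType.
Local Notation e := (@order_super_rel gT).

Lemma e_sym W : symmetric (rel_in e W).
Proof.
move=> x y; rewrite /rel_in /= eq_sym; do 2 case: (_ \in W) => //=.
by rewrite /order_super_rel /= (eq_sym y) orbC.
Qed.

Lemma rel_eq (W : {set gT}) (u v : gT) : u \in W -> v \in W -> u != v -> #[u]%g = #[v]%g -> rel_in e W u v.
Proof. by move=> uW vW uv o; rewrite /rel_in /= uW vW uv /order_super_rel /= uv o dvdnn. Qed.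

Lemma cyc (W : {set gT}) (x y z : gT) : x \in W -> y \in W -> z \in W -> x != y -> x != z -> y != z ->
  #[x]%g = #[y]%g -> #[x]%g = #[z]%g -> contains_cycle e W (component e W x).
Proof.
move=> xW yW zW xy xz yz oy oz.
exists [:: x; y; z]; split.
  rewrite /is_cycle /= xW yW zW !in_cons in_nil !negb_or xy xz yz /=.
  rewrite !rel_eq // ?(eq_sym z) // -?oy -?oz //.
move=> w; rewrite !in_cons in_nil orbF => /or3P [] /eqP ->; rewrite inE ?xW ?yW ?zW /=.
- exact: connect0.
- by apply: connect1; apply: rel_eq.
- by apply: connect1; apply: rel_eq.
Qed.

Lemma card_sep (V : {set gT}) : cyclically_separable V e -> 6 <= #|V|.
Proof.
move=> [S [SV [x [y [xW yW nxy [s1 [cs1 ss1]] [s2 [cs2 ss2]]]]]]].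
set W := V :\: S in xW yW nxy cs1 ss1 cs2 ss2 *.
have csym := sym_connect_sym (e_sym W).
have cge s (C : {set gT}) : is_cycle e W s -> {subset s <= C} -> 3 <= #|C|.
  rewrite /is_cycle => /and4P [sz us _ _] sC.
  apply: leq_trans sz _; rewrite -(card_uniqP us); apply: subset_leq_card.
  by apply/subsetP.
have h1 := cge _ _ cs1 ss1; have h2 := cge _ _ cs2 ss2.
set Cx := component e W x in h1; set Cy := component e W y in h2.
have dis : Cx :&: Cy = set0.
  apply/setP=> z; rewrite /Cx /Cy /component !inE; apply/negP => /and3P [/andP [_ cxz] _ cyz].
  by case/negP: nxy; apply: connect_trans cxz _; rewrite csym.
have sub : Cx :|: Cy \subset V.
  by apply/subsetP=> z; rewrite /Cx /Cy /component !inE => /orP [] /andP [] /andP [].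
have := subset_leq_card sub; rewrite cardsU dis cards0 subn0.
move=> h; apply: leq_trans h; exact: leq_add h1 h2.
Qed.

Lemma sep (V : {set gT}) (x1 x2 x3 y1 y2 y3 : gT) :
  [/\ x1 \in V, x2 \in V & x3 \in V] -> [/\ y1 \in V, y2 \in V & y3 \in V] ->
  [/\ x1 != x2, x1 != x3 & x2 != x3] -> [/\ y1 != y2, y1 != y3 & y2 != y3] ->
  [/\ #[x1]%g = 2, #[x2]%g = 2 & #[x3]%g = 2] ->
  [/\ #[y1]%g = 3, #[y2]%g = 3 & #[y3]%g = 3] ->
  cyclically_separable V e.
Proof.
move=> [x1V x2V x3V] [y1V y2V y3V] [n12 n13 n23] [m12 m13 m23] [o1 o2 o3] [p1 p2 p3].
pose W := [set x1; x2; x3; y1; y2; y3].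
have memW z : z \in W -> forall P : gT -> Prop,
    P x1 -> P x2 -> P x3 -> P y1 -> P y2 -> P y3 -> P z.
  rewrite !inE => H P ? ? ? ? ? ?.
  by case/orP: H => [/orP [/orP [/orP [/orP [/eqP->//|/eqP->//]|/eqP->//]|/eqP->//]|/eqP->//]|/eqP->//].
have WV : W \subset V by apply/subsetP=> z /memW H; exact: (H (fun z => z \in V)).
have VW : V :\: (V :\: W) = W.
  apply/setP=> z; rewrite !in_setD; case zW: (z \in W) => /=; last by rewrite andNb.
  by rewrite (subsetP WV).
have oW z : z \in W -> #[z]%g = 2 \/ #[z]%g = 3.
  by move/memW => H; apply: (H (fun z => #[z]%g = 2 \/ #[z]%g = 3)); auto.
have inW : [/\ x1 \in W, x2 \in W, x3 \in W, y1 \in W & (y2 \in W) && (y3 \in W)].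
  by rewrite !inE !eqxx !orbT.
case: inW => x1W x2W x3W y1W /andP [y2W y3W].
exists (V :\: W); split; first exact: subsetDl.
exists x1, y1; rewrite VW; split => //.
- have cl : closed (rel_in e W) [pred z | #[z]%g == 2].
    move=> u v /and4P [uW vW _ /andP [_ d]]; rewrite !inE.
    move: d; case: (oW u uW) => ->; case: (oW v vW) => -> //.
  by apply/negP => /(closed_connect cl); rewrite !inE o1 p1.
- by apply: (cyc x1W x2W x3W n12 n13 n23); rewrite ?o1 ?o2 ?o3.
- by apply: (cyc y1W y2W y3W m12 m13 m23); rewrite ?p1 ?p2 ?p3.
Qed.
End G.

Theorem mainTheorem7 (n : nat) (hn : 0 < n) :
  order_supergraph_cyclically_separable ('Alt_('I_n))%g
  <-> 4 <= n.
Proof.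
split.
- move=> /card_sep; apply: contraTT; rewrite -ltnNge => n4.
  rewrite -leqNgt.
  case: n hn n4 => [|[|[|[|n]]]] // _ _.
  + apply: leq_trans (subset_leq_card (subsetT _)) _; by rewrite cardsT card_Sn.
  + have := card_Alt (T:='I_2); rewrite card_ord => /(_ isT).
    change (2`!) with 2 => H; lia.
  + have := card_Alt (T:='I_3); rewrite card_ord => /(_ isT).
    change (3`!) with 6 => H; lia.
- move=> n4.
  have h0 : 0 < n := leq_trans (isT : 1 <= 4) n4.
  have h1 : 1 < n := leq_trans (isT : 2 <= 4) n4.
  have h2 : 2 < n := leq_trans (isT : 3 <= 4) n4.
  have h3 : 3 < n := n4.
  pose a := Ordinal h0; pose b := Ordinal h1; pose c := Ordinal h2; pose d := Ordinal h3.
  have ab : a != b by []. have ac : a != c by []. have ad : a != d by [].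
  have bc : b != c by []. have bd : b != d by []. have cd : c != d by [].
  rewrite /order_supergraph_cyclically_separable.
  apply: (@sep _ _ (Perms.i1 a b c d) (Perms.i2 a b c d) (Perms.i3 a b c d)
     (Perms.t1 a b c) (Perms.t2 a b c) (Perms.t3 a b d)); split.
  all: try first [ by apply: Perms.i1A | by apply: Perms.i2A | by apply: Perms.i3A | by apply: Perms.t1A | by apply: Perms.t2A | by apply: Perms.t3A
   | by apply: Perms.i12 | by apply: Perms.i13 | by apply: Perms.i23 | by apply: Perms.t12 | by apply: Perms.t13 | by apply: Perms.t23
   | by apply: Perms.i1o | by apply: Perms.i2o | by apply: Perms.i3o | by apply: Perms.t1o | by apply: Perms.t2o | by apply: Perms.t3o | by apply: (@Perms.t1o _ a b c d) | by apply: (@Perms.t2o _ a b c d) | by apply: (@Perms.t3o _ a b c d) ].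

Qed.
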